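(* Let $x_1,x_2,x_3>0$, $\gamma,\delta>0$ with $\gamma\ne1\ne\delta$, and let $$\mathbf{Q}=\begin{pmatrix}1&\delta x_1&x_2&x_3\\ 1/(\delta x_1)&1&x_2/x_1&x_3/x_1\\ 1/x_2&x_1/x_2&1&\gamma x_3/x_2\\ 1/x_3&x_1/x_3&x_2/(\gamma x_3)&1\end{pmatrix}$$ with principal right eigenvector $\mathbf{w}^{EM}$. If $\delta,\gamma<1$, then $w_1^{EM}/w_4^{EM}<x_3$.
   Context: The principal right eigenvector is the positive (Perron) eigenvector belonging to the largest eigenvalue. *)

(* Defs.v *)
From HB Require Import structures.
From mathcomp Require Import all_boot all_order all_algebra.
From mathcomp Require Import reals.
Set Implicit Arguments. Unset Strict Implicit. Unset Printing Implicit Defensive.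
Import Order.TTheory GRing.Theory Num.Theory.
Local Open Scope ring_scope.

(* The 4x4 matrix Q of the paper (indices 0..3 correspond to 1..4). *)
Definition Qmat (R : realType) (x1 x2 x3 g d : R) : 'M[R]_4 :=
  \matrix_(i < 4, j < 4)
    nth 0 (nth [::]
      [:: [:: 1; d * x1; x2; x3];
          [:: (d * x1)^-1; 1; x2 / x1; x3 / x1];
          [:: x2^-1; x1 / x2; 1; g * x3 / x2];
          [:: x3^-1; x1 / x3; x2 / (g * x3); 1]] i) j.

Definition principal_right_eigvec (R : realType) (n : nat)
    (A : 'M[R]_n) (w : 'cV[R]_n) : Prop :=
  (forall i, 0 < w i 0) /\
  exists lam : R, A *m w = lam *: w /\
    (forall (mu : R) (v : 'cV[R]_n), v != 0 -> A *m v = mu *: v -> mu <= lam).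

Definition idx4 (k : nat) (H : (k < 4)%N) : 'I_4 := Ordinal H.

(* Main.v *)
Require Import Defs.
From HB Require Import structures.
From mathcomp Require Import all_boot all_order all_algebra.
From mathcomp Require Import reals.
From mathcomp Require Import ring lra.
Import Order.TTheory GRing.Theory Num.Theory.
Local Open Scope ring_scope.

Theorem mainTheorem13 (R : realType) (x1 x2 x3 g d : R) (w : 'cV[R]_4) :
  0 < x1 -> 0 < x2 -> 0 < x3 -> 0 < g -> 0 < d -> g != 1 -> d != 1 ->
  principal_right_eigvec (Qmat x1 x2 x3 g d) w ->
  d < 1 -> g < 1 ->
  w (@idx4 0 isT) 0 / w (@idx4 3 isT) 0 < x3.
Proof.
move=> hx1 hx2 hx3 hg hd _ _ [wpos [lam [Heq _]]] hd1 hg1.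
have -> : @idx4 0 isT = ord0 by apply/val_inj.
have -> : @idx4 3 isT = lift ord0 (lift ord0 (lift ord0 ord0)) by apply/val_inj.
have e1 := congr1 (fun M : 'cV[R]_4 => M ord0 0) Heq.
have e4 := congr1 (fun M : 'cV[R]_4 => M (lift ord0 (lift ord0 (lift ord0 ord0))) 0) Heq.
move: e1 e4; rewrite /= !mxE !big_ord_recl !big_ord0 /= !mxE /=.
rewrite !addr0 !mul1r.
set a := w _ 0; set b := w _ 0; set c := w _ 0; set e := w _ 0.
move=> e1 e4.
have ha : 0 < a by apply: wpos.
have hb : 0 < b by apply: wpos.
have hc : 0 < c by apply: wpos.
have he : 0 < e by apply: wpos.
rewrite ltr_pdivrMr //.
have key : lam * (a - x3 * e) = (d - 1) * x1 * b + x2 * (1 - g^-1) * c.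
  rewrite mulrBr mulrCA -e1 -e4; field; lra.
have hlam : 0 < lam.
  have : 0 < lam * a by rewrite -e1; apply: ltr_wpDl; first exact: ltW;
    rewrite ?addr_gt0 ?mulr_gt0 //.
  by rewrite pmulr_lgt0.
have : (d - 1) * x1 * b + x2 * (1 - g^-1) * c < 0.
  have hgi : 1 < g^-1 by rewrite invf_gt1.
  have h1 : 0 < (1 - d) * x1 * b by rewrite !mulr_gt0 // subr_gt0.
  have h2 : 0 < x2 * (g^-1 - 1) * c by rewrite !mulr_gt0 // subr_gt0.
  have -> : (d - 1) * x1 * b + x2 * (1 - g^-1) * c =
     - ((1 - d) * x1 * b + x2 * (g^-1 - 1) * c) by ring.
  by rewrite oppr_lt0 addr_gt0.
rewrite -key pmulr_rlt0 // subr_lt0 mulrC //.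
Qed.
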